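(* Let $(X,\|\cdot\|_X)$ be a finite-dimensional real normed space and $x\in S_X$. Then $\|\cdot\|_X$ fails to be differentiable at $x$ if and only if there exist $\delta>0$ and $\varepsilon_0>0$ such that for every $0<\varepsilon<\varepsilon_0$ there exist $u,v\in S_X\setminus\{x,-x\}$ with $$\max\{\|u-x\|_X,\|v+x\|_X\}\le\varepsilon\quad\text{and}\quad \|u-v\|_X\le 2-\delta\varepsilon.$$
   Context: $S_X=\{x\in X:\|x\|_X=1\}$. *)

(* Defs.v *)
From HB Require Import structures.
From mathcomp Require Import all_boot all_order all_algebra.
From mathcomp Require Import all_classical all_reals all_analysis.
Set Implicit Arguments. Unset Strict Implicit. Unset Printing Implicit Defensive.
Import Order.TTheory GRing.Theory Num.Theory.
Import numFieldNormedType.Exports.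
Local Open Scope ring_scope.

Definition unit_sphere {R : realType} (X : normedModType R) : set X :=
  [set x | `|x| = 1].

Definition finite_dim {R : realType} (X : normedModType R) : Prop :=
  exists n : nat, exists f : {linear 'rV[R]_n -> X}, bijective f.
Arguments unit_sphere {R} X.
Arguments finite_dim {R} X.

(* Main.v *)
Require Import Defs.
From HB Require Import structures.
From mathcomp Require Import all_boot all_order all_algebra.
From mathcomp Require Import all_classical all_reals all_analysis.
From mathcomp Require Import ring lra.
Import Order.TTheory GRing.Theory Num.Theory.
Import numFieldNormedType.Exports.
Local Open Scope ring_scope.
Local Open Scope classical_set_scope.
Lemma mono_q {R : realType} {X : normedModType R} (x e : X) (s t : R) :
  `|x| = 1 -> 0 < s -> s <= t ->
  (`|x + s *: e| - 1) * t <= (`|x + t *: e| - 1) * s.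
Proof.
move=> hx s0 st.
have t0 : 0 < t by apply: lt_le_trans s0 st.
have eq : t *: (x + s *: e) = (t - s) *: x + s *: (x + t *: e).
  by rewrite !scalerDr !scalerA scalerBl mulrC addrA subrK.
have : `|t *: (x + s *: e)| <= (t - s) + s * `|x + t *: e|.
  rewrite eq; apply: le_trans (ler_normD _ _) _.
  by rewrite !normrZ hx mulr1 !ger0_norm ?subr_ge0 // ltW.
rewrite normrZ ger0_norm; [lra | exact: ltW].
Qed.
Lemma dirder {R : realType} {X : normedModType R} (x e : X) :
  `|x| = 1 ->
  (forall c t0 : R, 0 < c -> 0 < t0 -> exists t, 0 < t < t0 /\
      `|x + t *: e| + `|x - t *: e| < 2 + c * t) ->
  exists d : R, forall eta : R, 0 < eta -> exists s0 : R, 0 < s0 /\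
    forall s : R, `|s| <= s0 -> `|x + s *: e| - 1 - s * d <= eta * `|s|.
Proof.
move=> hx NNS.
pose E := [set y : R | exists2 t : R, 0 < t & y = (`|x + t *: e| - 1) / t].
have lbE : forall t, 0 < t -> - `|e| <= (`|x + t *: e| - 1) / t.
  move=> t t0; rewrite ler_pdivlMr // mulNr.
  have := ler_dist_dist (x + t *: e) x.
  rewrite addrAC subrr add0r normrZ gtr0_norm // hx => /ler_normlP [h1 h2]; lra.
have hinf : has_inf E.
  split; first by exists ((`|x + 1 *: e| - 1) / 1); exists 1.
  by exists (- `|e|) => y [t t0 ->]; exact: lbE.
have dle : forall t, 0 < t -> inf E * t <= `|x + t *: e| - 1.
  move=> t t0; rewrite -ler_pdivlMr //; apply: ge_inf; first by case: hinf.
  by exists t.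
exists (inf E) => eta eta0.
have [y [t1 t10 ->] ylt] := inf_adherent eta0 hinf.
have {ylt} h1 : `|x + t1 *: e| - 1 < (inf E + eta) * t1.
  by rewrite -ltr_pdivrMr.
have [t2 [/andP [t20 t21] h2]] := NNS eta t1 eta0 t10.
exists t2; split => // s hs.
have [s0|s0|->] := ltgtP s 0; last by rewrite scale0r addr0 hx normr0; lra.
-
  have hs' : -s <= t2 by rewrite -(ltr0_norm s0).
  have ns0 : 0 < -s by rewrite oppr_gt0.
  have := mono_q x (-e) _ _ hx ns0 hs'.
  rewrite !scalerN scaleNr opprK => hm.
  have hd := dle t2 t20.
  rewrite ltr0_norm //.
  have : (`|x + s *: e| - 1) * t2 <= (eta - inf E) * t2 * (- s).
    apply: (le_trans hm); rewrite ler_wpM2r ?oppr_ge0 ?ltW //; lra.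
  rewrite -mulrA (mulrC t2) mulrA ler_pM2r //; lra.
-
  have hs' : s <= t1 by apply: le_trans (ltW t21); rewrite -(gtr0_norm s0).
  have := mono_q x e _ _ hx s0 hs'.
  rewrite gtr0_norm // => hm.
  have : (`|x + s *: e| - 1) * t1 <= (inf E + eta) * t1 * s.
    apply: (le_trans hm); rewrite ler_wpM2r ?ltW //; lra.
  rewrite -mulrA (mulrC t1) mulrA ler_pM2r //; lra.
Qed.
Lemma row_le_norm {R : realType} n (c : 'rV[R]_n) i : `|c 0 i| <= `|c|.
Proof.
rewrite [leRHS]/Num.norm /= mx_normrE; apply/bigmax_geP; right => /=.
by exists (ord0, i).
Qed.

Lemma lin_fwd {R : realType} {X : normedModType R} {n : nat}
  (f : {linear 'rV[R]_n -> X}) (c : 'rV[R]_n) :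
  `|f c| <= `|c| * \sum_i `|f (delta_mx 0 i)|.
Proof.
rewrite {1}(row_sum_delta c) linear_sum mulr_sumr.
apply: le_trans (ler_norm_sum _ _ _) _; apply: ler_sum => i _.
by rewrite linearZ normrZ ler_wpM2r // row_le_norm.
Qed.

Lemma lin_cont {R : realType} {X : normedModType R} {n : nat}
  (f : {linear 'rV[R]_n -> X}) : continuous f.
Proof.
apply: bounded_linear_continuous; apply/bounded_funP => r.
exists (r * \sum_i `|f (delta_mx 0 i)|) => c hc.
apply: le_trans (lin_fwd f c) _; rewrite ler_wpM2r //.
by apply: sumr_ge0 => i _.
Qed.

Lemma coord_bound {R : realType} {X : normedModType R} {n : nat}
  (f : {linear 'rV[R]_n -> X}) : injective f ->
  exists2 C : R, 0 < C & forall c, `|c| <= C * `|f c|.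
Proof.
move=> finj.
have [[c0 c0n]|allz] := pselect (exists c : 'rV[R]_n, c != 0); last first.
  exists 1 => // c; have -> : c = 0.
    have [//|cn] := eqVneq c 0; by exfalso; apply: allz; exists c.
  by rewrite normr0 mul1r.
pose S := [set c : 'rV[R]_n | `|c| = 1].
have S0 : S !=set0 by exists (`|c0|^-1 *: c0); rewrite /S /= normfZV.
have Sc : compact S.
  apply: bounded_closed_compact.
    exists 1; split; first by rewrite num_real.
    by move=> y y1 c /= ->; exact: ltW.
  have -> : S = (fun c => `|c|) @^-1` [set x | x = 1] by [].
  apply: preimage_closed; last exact: closed_eq.
  by move=> c _; exact: norm_continuous.
have gc : {within S, continuous (fun c => `|f c|)}.
  apply: continuous_subspaceT => c.
  apply: continuous_comp; first exact: lin_cont.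
  exact: norm_continuous.
have [cm cmS cmin] := EVT_min_rV S0 Sc gc.
have cm1 : `|cm| = 1 by move: cmS; rewrite inE.
have fpos : 0 < `|f cm|.
  rewrite normr_gt0; apply/negP => /eqP fc0.
  have : cm = 0 by apply: finj; rewrite fc0 linear0.
  by move=> cm0; move: cm1; rewrite cm0 normr0 => /eqP; rewrite eq_sym oner_eq0.
exists (`|f cm|^-1); first by rewrite invr_gt0.
move=> c; have [->|cn] := eqVneq c 0; first by rewrite normr0 mulr_ge0 // invr_ge0.
have := cmin (`|c|^-1 *: c); rewrite inE /S /= normfZV // => /(_ erefl).
rewrite linearZ normrZ ger0_norm ?invr_ge0 // => h.
have cp : 0 < `|c| by rewrite normr_gt0.
rewrite -(ler_pM2l cp) mulrA mulfV ?gt_eqF // mul1r in h.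
by rewrite -(ler_pM2l fpos) mulrA mulfV ?gt_eqF // mul1r mulrC.
Qed.
Definition mklin {R : pzRingType} {U V : lmodType R} (g : U -> V)
  (_ : forall a u v, g (a *: u + v) = a *: g u + g v) : U -> V := g.
HB.instance Definition _ {R : pzRingType} {U V : lmodType R} (g : U -> V)
  (gl : forall a u v, g (a *: u + v) = a *: g u + g v) :=
  GRing.isLinear.Build R U V *:%R (@mklin R U V g gl) gl.

Definition Lco {R : realType} {X : normedModType R} {n : nat}
  (G : {linear X -> 'rV[R]_n}) (d : 'I_n -> R) : X -> R :=
  fun y => \sum_i G y 0 i * d i.

Lemma Lco_lin {R : realType} {X : normedModType R} {n : nat}
  (G : {linear X -> 'rV[R]_n}) (d : 'I_n -> R) : linear (Lco G d).
Proof.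
move=> a u v; rewrite /Lco linearP.
rewrite scaler_sumr -big_split /=; apply: eq_bigr => i _.
by rewrite !mxE mulrDl -mulrA.
Qed.

HB.instance Definition _ {R : realType} {X : normedModType R} {n : nat}
  (G : {linear X -> 'rV[R]_n}) (d : 'I_n -> R) :=
  GRing.isLinear.Build R X R *:%R (Lco G d) (Lco_lin G d).

Lemma diff_of {R : realType} {V W : normedModType R} (f : V -> W)
  (df : {linear V -> W}) x :
  continuous df -> f \o shift x = cst (f x) + df +o_ 0 id -> differentiable f x.
Proof.
move=> dfc dxf.
have hdf h : (f \o shift x = cst (f x) + h +o_ 0 id) ->
    h = f \o shift x - cst (f x) +o_ 0 id.
  move=> hdf; apply: eqaddoE.
  rewrite hdf addrAC -!addrA addrC !addrA subrK.
  rewrite -[LHS]addr0 -addrA; congr (_ + _).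
  by apply/eqP; rewrite eq_sym addrC addr_eq0 oppo.
apply/diffP => /=.
apply: (@getPex _ (fun (df : {linear V -> W}) => continuous df /\
  forall y, f y = f (lim (nbhs x)) + df (y - lim (nbhs x))
                  +o_(y \near x) (y - lim (nbhs x)))).
exists df; split=> //; apply: eqaddoEx => z.
rewrite (hdf _ dxf) !addrA lim_id // /(_ \o _) /= subrK [f _ + _]addrC addrK.
rewrite -addrA -[LHS]addr0; congr (_ + _).
apply/eqP; rewrite eq_sym addrC addr_eq0 oppox; apply/eqP.
rewrite [in LHS]littleo_center0 (comp_centerK x id).
by rewrite -[- _ in RHS](comp_centerK x).
Qed.
Lemma upper {R : realType} {X : normedModType R} {n : nat}
  (G : {linear X -> 'rV[R]_n}) (f : {linear 'rV[R]_n -> X}) (gf : cancel G f)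
  (x : X) (hx : `|x| = 1) (d s0 : 'I_n -> R) (eta : R)
  (hd : forall i s, `|s| <= s0 i ->
     `|x + s *: f (delta_mx 0 i)| - 1 - s * d i <= eta * `|s|)
  (n0 : (0 < n)%N) (h : X) (H : forall i, `|n%:R * G h 0 i| <= s0 i) :
  `|x + h| - 1 - Lco G d h <= eta * \sum_i `|G h 0 i|.
Proof.
have nR : 0 < n%:R :> R by rewrite ltr0n.
have eh : x + h = \sum_i n%:R^-1 *: (x + (n%:R * G h 0 i) *: f (delta_mx 0 i)).
  under eq_bigr => i _ do rewrite scalerDr.
  rewrite big_split /= sumr_const card_ord scalerMnl -mulr_natr mulVf ?gt_eqF //.
  rewrite scale1r; congr (_ + _).
  rewrite -{1}(gf h) {1}(row_sum_delta (G h)) linear_sum; apply: eq_bigr => i _.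
  by rewrite linearZ scalerA mulrA mulVf ?gt_eqF // mul1r.
rewrite eh.
have hs : \sum_(i < n) n%:R^-1 = 1 :> R.
  by rewrite sumr_const cardT size_enum_ord -(mulr_natr (n%:R^-1)) mulVf ?gt_eqF.
rewrite -[X in _ - X - _ <= _]hs /Lco.
apply: le_trans (lerB (lerB (ler_norm_sum _ _ _) (lexx _)) (lexx _)) _.
rewrite -!sumrB mulr_sumr; apply: ler_sum => i _.
have := hd i _ (H i).
rewrite normrM (ger0_norm (ltW nR)) => hi.
have ni : 0 <= n%:R^-1 :> R by rewrite invr_ge0 ltW.
rewrite normrZ (ger0_norm ni).
rewrite -(ler_pM2l nR) !mulrBr !mulrA mulfV ?gt_eqF // !mul1r.
lra.
Qed.

Lemma diff_norm {R : realType} {X : normedModType R} (hfin : finite_dim X)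
  (x : X) (hx : `|x| = 1)
  (D : forall e : X, exists d : R, forall eta, 0 < eta -> exists s0, 0 < s0 /\
     forall s, `|s| <= s0 -> `|x + s *: e| - 1 - s * d <= eta * `|s|) :
  differentiable (fun y : X => `|y|) x.
Proof.
case: hfin => -[|n] [f [g fg gf]].
  exfalso; move: hx; rewrite -(gf x) (thinmx0 (g x)) linear0 normr0 => /eqP.
  by rewrite eq_sym oner_eq0.
have gl : forall a u v, g (a *: u + v) = a *: g u + g v.
  by move=> a u v; apply: (can_inj fg); rewrite gf linearP !gf.
pose G : {linear X -> 'rV[R]_n.+1} := @mklin _ _ _ g gl.
have Gf : cancel G f := gf.
have [d hd] := choice (fun i : 'I_n.+1 => D (f (delta_mx 0 i))).
have [C C0 HC] := @coord_bound _ _ _ f (can_inj fg).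
have HG : forall y, `|G y| <= C * `|y|.
  by move=> y; have := HC (G y); rewrite Gf.
have HS : forall y, \sum_i `|G y 0 i| <= n.+1%:R * (C * `|y|).
  move=> y; apply: le_trans (_ : \sum_(i < n.+1) (C * `|y|) <= _).
    by apply: ler_sum => i _; apply: le_trans (HG y); exact: row_le_norm.
  by rewrite sumr_const card_ord mulr_natl.
have HL : forall y, `|Lco G d y| <= C * `|y| * \sum_i `|d i|.
  move=> y; rewrite /Lco mulr_sumr.
  apply: le_trans (ler_norm_sum _ _ _) _; apply: ler_sum => i _.
  rewrite normrM ler_wpM2r //; apply: le_trans (HG y); exact: row_le_norm.
apply: (@diff_of _ _ _ _ (Lco G d)).
  apply: bounded_linear_continuous; apply/bounded_funP => r.
  exists (C * r * \sum_i `|d i|) => y hy.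
  apply: le_trans (HL y) _; rewrite ler_wpM2r ?sumr_ge0 // ler_wpM2l // ltW //.
apply/eqaddoP => eps eps0.
have nR : 0 < n.+1%:R :> R by rewrite ltr0n.
pose eta := eps / (n.+1%:R * C).
have eta0 : 0 < eta by rewrite divr_gt0 // mulr_gt0.
have [s0 hs0] := choice (fun i : 'I_n.+1 => hd i eta eta0).
have Hn : \forall h \near (0 : X), forall i,
    `|n.+1%:R * G h 0 i| <= s0 i /\ `|n.+1%:R * G (- h) 0 i| <= s0 i.
  apply: filter_forall => i; apply/nbhs_norm0P.
  have s00 := (hs0 i).1.
  exists (s0 i / (n.+1%:R * C)); first by rewrite /= divr_gt0 // mulr_gt0.
  move=> h /= hh.
  have : `|n.+1%:R * G h 0 i| <= s0 i.
    rewrite normrM (ger0_norm (ltW nR)).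
    apply: le_trans (_ : n.+1%:R * (C * `|h|) <= _).
      by rewrite ler_pM2l //; apply: le_trans (row_le_norm _ (G h) i) (HG h).
    by rewrite mulrA -ler_pdivlMl ?mulr_gt0 // mulrC ltW.
  by rewrite linearN mxE mulrN normrN.
apply: filterS Hn => h Hh /=.
have U1 := @upper _ _ _ G f Gf x hx d s0 eta (fun i => (hs0 i).2) (ltn0Sn n) h (fun i => (Hh i).1).
have U2 := @upper _ _ _ G f Gf x hx d s0 eta (fun i => (hs0 i).2) (ltn0Sn n) (- h) (fun i => (Hh i).2).
have E2 : \sum_i `|G (- h) 0 i| = \sum_i `|G h 0 i|.
  by apply: eq_bigr => i _; rewrite linearN mxE normrN.
rewrite E2 linearN /= in U2.
have S1 : eta * \sum_i `|G h 0 i| <= eps * `|h|.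
  apply: le_trans (ler_wpM2l (ltW eta0) (HS h)) _.
  by rewrite /eta [n.+1%:R * (C * _)]mulrA mulrA divfK // gt_eqF // mulr_gt0.
have T : 2 <= `|x + h| + `|x - h|.
  have : `|x + h + (x - h)| <= `|x + h| + `|x - h| by exact: ler_normD.
  by rewrite addrACA subrr addr0 -mulr2n -scaler_nat normrZ hx mulr1 ger0_norm.
rewrite [X in `|X| <= _](_ : _ = `|x + h| - (1 + Lco G d h)); last by rewrite -[LHS]/(`|h + x| - (`|x| + Lco G d h)) (addrC h x) hx.
rewrite ler_norml; apply/andP; split; lra.
Qed.
Lemma diff_nocond {R : realType} {X : normedModType R} (x : X) (hx : `|x| = 1) :
  differentiable (fun y : X => `|y|) x ->
  forall delta eps0 : R, 0 < delta -> 0 < eps0 ->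
  exists eps : R, 0 < eps < eps0 /\ forall u v : X, `|u| = 1 -> `|v| = 1 ->
    Num.max `|u - x| `|v + x| <= eps -> 2 - delta * eps < `|u - v|.
Proof.
move=> dx delta eps0 d0 e00.
set L := 'd (fun y : X => `|y|) x.
have ho := diff_locally dx.
move/eqaddoP: ho => lo.
have key : forall eta : R, 0 < eta -> exists2 rho : R, 0 < rho &
    forall h, `|h| < rho -> `| `|h + x| - (1 + L h)| <= eta * `|h|.
  move=> eta eta0; have := lo eta eta0; move/nbhs_norm0P => [rho rho0 hr].
  exists rho => // h hh.
  have H : `| `|h + x| - (`|x| + L h)| <= eta * `|h| := hr h hh.
  by rewrite hx in H.
have Lx : 1 <= L x.
  apply/ler_addgt0Pr => e e0; have [rho rho0 hr] := key e e0.
  have t0 : 0 < rho / 2 by rewrite divr_gt0.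
  have := hr ((rho / 2) *: x).
  rewrite normrZ hx mulr1 gtr0_norm // ltr_pdivrMr // ltr_pMr // ltr1n => /(_ isT).
  have -> : (rho / 2) *: x + x = (rho / 2 + 1) *: x by rewrite scalerDl scale1r.
  rewrite normrZ hx mulr1 gtr0_norm ?addr_gt0 // linearZ /=.
  move=> /ler_normlP [_ H0].
  have H : rho / 2 + 1 - (1 + rho / 2 * L x) <= e * (rho / 2) := H0.
  have : (rho / 2) * (1 - L x) <= (rho / 2) * e by lra.
  rewrite ler_pM2l //; lra.
have Lz : forall z, L z <= `|z|.
  move=> z; apply/ler_addgt0Pr => e e0.
  pose eta := e / (`|z| + 1).
  have z1 : 0 < `|z| + 1 by rewrite ltr_wpDl.
  have eta0 : 0 < eta by rewrite divr_gt0.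
  have [rho rho0 hr] := key eta eta0.
  pose t := rho / (2 * (`|z| + 1)).
  have t0 : 0 < t by rewrite divr_gt0 // mulr_gt0.
  have htz : `|t *: z| < rho.
    rewrite normrZ gtr0_norm // /t mulrC mulrA ltr_pdivrMr ?mulr_gt0 //.
    rewrite mulrC ltr_pM2l //; lra.
  have := hr _ htz; rewrite linearZ /= => /ler_normlP [H0 _].
  have H : - (`|t *: z + x| - (1 + t * L z)) <= eta * `|t *: z| := H0.
  have : `|t *: z + x| <= t * `|z| + 1.
    by apply: le_trans (ler_normD _ _) _; rewrite normrZ gtr0_norm // hx.
  move=> H2.
  have : t * L z <= t * (`|z| + e).
    have : eta * `|t *: z| <= t * e.
      rewrite normrZ gtr0_norm // mulrC -mulrA ler_pM2l // /eta mulrC.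
      by rewrite mulrAC ler_pdivrMr // ler_pM2l // lerDl.
    lra.
  by rewrite ler_pM2l.
pose eta := delta / 4.
have eta0 : 0 < eta by rewrite divr_gt0.
have [rho rho0 hr] := key eta eta0.
exists (Num.min eps0 rho / 2).
have m0 : 0 < Num.min eps0 rho by rewrite lt_min e00.
split.
  rewrite divr_gt0 //= ltr_pdivrMr // (@le_lt_trans _ _ eps0) ?ge_min ?lexx //.
  by rewrite ltr_pMr // ltr1n.
move=> u v u1 v1; rewrite ge_max => /andP [hu hv].
set eps := Num.min eps0 rho / 2 in hu hv *.
have erho : eps < rho.
  rewrite /eps ltr_pdivrMr // (@le_lt_trans _ _ rho) ?ge_min ?lexx ?orbT //.
  by rewrite ltr_pMr // ltr1n.
have e0 : 0 < eps by rewrite divr_gt0.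
have H1 := hr (u - x) (le_lt_trans hu erho).
rewrite subrK u1 in H1; move/ler_normlP: H1 => H1.
have hv' : `|- v - x| <= eps by rewrite -opprD normrN.
have H2 := hr (- v - x) (le_lt_trans hv' erho).
rewrite subrK normrN v1 in H2; move/ler_normlP: H2 => H2.
have decomp : u - v = (u - x) + (- v - x) + x + x.
  by rewrite (addrC (u - x)) -(addrA _ (u - x)) subrK addrAC subrK addrC.
set a := u - x in H1 hu decomp.
set b := - v - x in H2 hv' decomp.
clearbody a b.
have := Lz (u - v); rewrite decomp !linearD /= -decomp => HL.
move: H1 H2 => [_ H1] [_ H2].
have E1 : eta * `|a| <= eta * eps by rewrite ler_pM2l.
have E2 : eta * `|b| <= eta * eps by rewrite ler_pM2l.
have E3 : eta * eps = delta * eps / 4 by rewrite /eta mulrAC.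
have E4 : 0 < delta * eps by rewrite mulr_gt0.
lra.
Qed.
Lemma comb_ident {R : realType} {V : lmodType R} (u w : V) (a b : R) :
  0 < a + b ->
  u + w = (2 / (a + b)) *: (a *: u + b *: w) + ((b - a) / (a + b)) *: (u - w).
Proof.
move=> ab.
rewrite scalerDr !scalerA scalerBr addrACA -scalerDl -scalerBl.
rewrite -{1}(scale1r u) -{1}(scale1r w).
congr (_ *: _ + _ *: _); field; rewrite gt_eqF //.
Qed.

Lemma ns_cond {R : realType} {X : normedModType R} (x h : X) (hx : `|x| = 1)
  (c t0 : R) (c0 : 0 < c) (t00 : 0 < t0)
  (NS : forall t, 0 < t < t0 -> 2 + c * t <= `|x + t *: h| + `|x - t *: h|) :
  exists delta : R, 0 < delta /\ exists eps0 : R, 0 < eps0 /\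
    forall eps : R, 0 < eps < eps0 ->
      exists u v : X,
        u \in unit_sphere X `\` [set x; - x] /\
        v \in unit_sphere X `\` [set x; - x] /\
        Num.max `|u - x| `|v + x| <= eps /\
        `|u - v| <= 2 - delta * eps.
Proof.
set M := `|h|.
have M0 : 0 < M.
  rewrite normr_gt0; apply/negP => /eqP h0.
  have t2 : 0 < t0 / 2 < t0 by rewrite divr_gt0 //= ltr_pdivrMr // ltr_pMr // ltr1n.
  have := NS _ t2; rewrite h0 scaler0 subr0 addr0 hx.
  have : 0 < c * (t0 / 2) by rewrite mulr_gt0 // divr_gt0.
  lra.
pose T := Num.min (Num.min t0 (1 / (2 * M))) (Num.min (2 / c) (c / (16 * (M * M)))).
have T0 : 0 < T.
  by rewrite !lt_min t00 !divr_gt0 ?mulr_gt0.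
exists (c / (8 * M)); split; first by rewrite divr_gt0 ?mulr_gt0.
exists (2 * M * T); split; first by rewrite !mulr_gt0.
move=> eps /andP [e0 eT].
pose t := eps / (2 * M).
have M2 : 0 < 2 * M by rewrite mulr_gt0.
have tpos : 0 < t by rewrite divr_gt0.
have epsE : eps = 2 * M * t by rewrite /t mulrC divfK ?gt_eqF.
have tT : t < T by rewrite /t ltr_pdivrMr // mulrC.
move: tT; rewrite !lt_min => /andP [/andP [ht1 ht2] /andP [ht3 ht4]].
have hP : t * M < 1 / 2.
  move: ht2; rewrite ltr_pdivlMr // => ht2.
  rewrite ltr_pdivlMr // -mulrA mulrC; lra.
have hct : c * t < 2 by move: ht3; rewrite ltr_pdivlMr // mulrC.
have hP2 : 16 * ((t * M) * (t * M)) < c * t.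
  move: ht4; rewrite ltr_pdivlMr ?mulr_gt0 // => ht4.
  have : t * (t * (16 * (M * M))) < t * c by rewrite ltr_pM2l.
  have -> : t * (t * (16 * (M * M))) = 16 * ((t * M) * (t * M)) by ring.
  by rewrite (mulrC c).
pose N1 := `|x + t *: h|.
pose N2 := `|x - t *: h|.
have tM : `|t *: h| = t * M by rewrite normrZ gtr0_norm.
have hN1 : - (t * M) <= N1 - 1 <= t * M.
  have := ler_dist_dist (x + t *: h) x.
  by rewrite addrAC subrr add0r tM hx => /ler_normlP [a b]; rewrite b andbT lerNl.
have hN2 : - (t * M) <= N2 - 1 <= t * M.
  have := ler_dist_dist (x - t *: h) x.
  by rewrite addrAC subrr add0r normrN tM hx => /ler_normlP [a b]; rewrite b andbT lerNl.
move: hN1 hN2 => /andP [hN1a hN1b] /andP [hN2a hN2b].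
have N1p : 0 < N1 by lra.
have N2p : 0 < N2 by lra.
have hS : 2 + c * t <= N1 + N2 by apply: NS; rewrite tpos ht1.
pose u := N1^-1 *: (x + t *: h).
pose w := N2^-1 *: (x - t *: h).
have Nu : N1 *: u = x + t *: h by rewrite /u scalerA mulfV ?gt_eqF // scale1r.
have Nw : N2 *: w = x - t *: h by rewrite /w scalerA mulfV ?gt_eqF // scale1r.
have u1 : `|u| = 1 by rewrite /u normfZV // -normr_gt0.
have w1 : `|w| = 1 by rewrite /w normfZV // -normr_gt0.
have du : `|u - x| <= 2 * (t * M).
  have -> : u - x = (N1^-1 - 1) *: (x + t *: h) + t *: h.
    by rewrite scalerBl scale1r opprD addrA subrK.
  apply: le_trans (ler_normD _ _) _; rewrite tM normrZ -/N1.
  have -> : `|N1^-1 - 1| * N1 = `|1 - N1|.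
    by rewrite -{2}(gtr0_norm N1p) -normrM mulrBl mulVf ?gt_eqF // mul1r.
  have : `|1 - N1| <= t * M by apply/ler_normlP; split; lra.
  lra.
have dw : `|w - x| <= 2 * (t * M).
  have -> : w - x = (N2^-1 - 1) *: (x - t *: h) - t *: h.
    by rewrite scalerBl scale1r opprB addrA addrAC addrK.
  apply: le_trans (ler_normB _ _) _; rewrite tM normrZ -/N2.
  have -> : `|N2^-1 - 1| * N2 = `|1 - N2|.
    by rewrite -{2}(gtr0_norm N2p) -normrM mulrBl mulVf ?gt_eqF // mul1r.
  have : `|1 - N2| <= t * M by apply/ler_normlP; split; lra.
  lra.
have ctp : 0 < c * t by rewrite mulr_gt0.
have tMp : 0 < t * M by rewrite mulr_gt0.
exists u, (- w).
split.
  apply/mem_set; split; first exact: u1.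
  move=> [ux|ux]; rewrite ux in Nu.
  - have E : t *: h = (N1 - 1) *: x by rewrite scalerBl scale1r Nu (addrC x) addrK.
    have : N2 = 2 - N1.
      rewrite /N2 E -{1}(scale1r x) -scalerBl normrZ hx mulr1 ger0_norm; last lra.
      by rewrite opprB addrA.
    lra.
  - have E : t *: h = N1 *: (- x) - x by rewrite Nu (addrC x) addrK.
    have : `|t *: h| = N1 + 1.
      rewrite E scalerN -opprD normrN -{2}(scale1r x) -scalerDl normrZ hx mulr1.
      by rewrite ger0_norm //; lra.
    lra.
split.
  apply/mem_set; split; first by rewrite /unit_sphere /= normrN w1.
  move=> [wx|wx].
  - have wx' : w = - x by rewrite -wx opprK.
    rewrite wx' in Nw.
    have E : t *: h = x - N2 *: (- x) by rewrite Nw opprB addrC subrK.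
    have : `|t *: h| = 1 + N2.
      rewrite E scalerN opprK -{1}(scale1r x) -scalerDl normrZ hx mulr1.
      by rewrite ger0_norm //; lra.
    lra.
  - have wx' : w = x by rewrite -[w]opprK wx opprK.
    rewrite wx' in Nw.
    have E : t *: h = (1 - N2) *: x by rewrite scalerBl scale1r Nw opprB addrC subrK.
    have : N1 = 2 - N2.
      rewrite /N1 E -{1}(scale1r x) -scalerDl normrZ hx mulr1 ger0_norm; last lra.
      by rewrite addrA.
    lra.
split.
  rewrite ge_max epsE; apply/andP; split; first lra.
  by rewrite addrC distrC; lra.
pose S := N1 + N2.
have Sp : 0 < S by rewrite /S; lra.
have ident := @comb_ident _ _ u w N1 N2 Sp.
rewrite Nu Nw in ident.
have xx : x + t *: h + (x - t *: h) = 2 *: x.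
  by rewrite addrACA subrr addr0 -mulr2n -scaler_nat.
rewrite xx in ident.
rewrite opprK ident.
apply: le_trans (ler_normD _ _) _.
rewrite !normrZ hx mulr1 normfV (gtr0_norm Sp) (ger0_norm (_ : 0 <= 2 :> R)) //.
have duw : `|u - w| <= 4 * (t * M).
  have -> : u - w = (u - x) - (w - x) by rewrite opprB addrA subrK.
  apply: le_trans (ler_normB _ _) _; lra.
have dN : `|N2 - N1| <= 2 * (t * M) by apply/ler_normlP; split; lra.
have AB : `|N2 - N1| * `|u - w| <= (2 * (t * M)) * (4 * (t * M)).
  by apply: ler_pM.
have de : c / (8 * M) * eps = c * t / 4.
  by rewrite epsE; field; rewrite gt_eqF.
rewrite de.
have -> : 2 * (N1 + N2)^-1 * 2 + `|N2 - N1| * (N1 + N2)^-1 * `|u - w| =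
    (4 + `|N2 - N1| * `|u - w|) / S.
  by rewrite /S; field; rewrite gt_eqF.
rewrite ler_pdivrMr //.
have h1 : (2 - c * t / 4) * (2 + c * t) <= (2 - c * t / 4) * S.
  by rewrite ler_wpM2l //; lra.
have h2 : (c * t) * (c * t) <= 2 * (c * t).
  by rewrite ler_pM2r //; lra.
lra.
Qed.

Theorem proposition1 (R : realType) (X : normedModType R)
  (hfin : finite_dim X) (x : X) (hx : x \in unit_sphere X) :
  ~ differentiable (fun y : X => `|y|) x <->
  exists delta : R, 0 < delta /\ exists eps0 : R, 0 < eps0 /\
    forall eps : R, 0 < eps < eps0 ->
      exists u v : X,
        u \in unit_sphere X `\` [set x; - x] /\
        v \in unit_sphere X `\` [set x; - x] /\
        Num.max `|u - x| `|v + x| <= eps /\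
        `|u - v| <= 2 - delta * eps.
Proof.
have hx1 : `|x| = 1 by move: hx; rewrite inE.
split.
- move=> nd.
  case: (pselect (exists h : X, exists c t0 : R, 0 < c /\ 0 < t0 /\
      forall t, 0 < t < t0 -> 2 + c * t <= `|x + t *: h| + `|x - t *: h|))
    => [[h [c [t0 [c0 [t00 NS]]]]] | nNS].
    exact: (@ns_cond _ _ x h hx1 c t0 c0 t00 NS).
  exfalso; apply: nd; apply: (@diff_norm _ _ hfin x hx1) => e.
  apply: (@dirder _ _ x e hx1) => c t0 c0 t00.
  apply: contrapT => nex; apply: nNS; exists e, c, t0; split=> //; split=> // t ht.
  rewrite leNgt; apply/negP => lt; apply: nex; exists t; split => //.
- move=> [delta [d0 [eps0 [e00 H]]]] dx.
  have [eps [/andP [e0 elt] Hc]] := @diff_nocond _ _ x hx1 dx delta eps0 d0 e00.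
  have [u [v [hu [hv [hm hn]]]]] := H eps (ltac:(by rewrite e0 elt)).
  move: hu hv; rewrite !inE => -[u1 _] [v1 _].
  have := Hc u v u1 v1 hm; lra.
Qed.
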